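(* Let $(X,<)$ be a linearly ordered set and $u,v\in\beta X$. Then $$\widetilde{\min}(u,v)=u\iff\widetilde{\max}(u,v)=v\iff \mathrm{supp}(u)<\mathrm{supp}(v)\ \vee\ \mathrm{supp}(u)=\mathrm{supp}(v)=I_u=I_v\ \vee\ u=v,$$ $$\widetilde{\min}(u,v)=v\iff\widetilde{\max}(u,v)=u\iff \mathrm{supp}(v)<\mathrm{supp}(u)\ \vee\ \mathrm{supp}(u)=\mathrm{supp}(v)=J_u=J_v\ \vee\ u=v.$$
   Context: $\beta X$ is the set of ultrafilters over $X$; $\tilde x=\{S\subseteq X:x\in S\}$. For a binary operation $F$ on $X$ (here $\min,\max$), $S\in\tilde F(u,v)\iff\{x\in X:\{y\in X:F(x,y)\in S\}\in v\}\in u$ for all $S\subseteq X$. $I_u=\bigcap\{I\in u: I\text{ initial segment of }X\}$, $J_u=\bigcap\{J\in u: J\text{ final segment of }X\}$; for non-principal $u$ exactly one of $I_u\in u$, $J_u\in u$ holds. Supports: $\mathrm{supp}(\tilde x)=\{x\}$; for non-principal $u$, $\mathrm{supp}(u)$ is $I_u$ regarded as a left half-cut if $I_u\in u$, and $J_u$ regarded as a right half-cut if $J_u\in u$; supports are equal iff of the same kind and equal as sets. ''$\mathrm{supp}(u)=\mathrm{supp}(v)=I_u=I_v$'' means $u,v$ non-principal, $I_u\in u$, $I_v\in v$, $I_u=I_v$; similarly for $J$. Order on supports: $\{x\}<\{y\}$ iff $x<y$; $\{x\}<I$ iff $x\in I$, $I<\{x\}$ iff $x\notin I$; $\{x\}<J$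 iff $x\notin J$, $J<\{x\}$ iff $x\in J$; $I<I'$ iff $I\subsetneq I'$; $J<J'$ iff $J\supsetneq J'$; $I<J$ iff $I\cap J=\emptyset$, $J<I$ iff $I\cap J\ne\emptyset$. *)

(* Defs.v *)
From HB Require Import structures.
From mathcomp Require Import all_boot all_order.
From Stdlib Require Import ClassicalEpsilon.
Set Implicit Arguments. Unset Strict Implicit. Unset Printing Implicit Defensive.
Import Order.TTheory.
Local Open Scope order_scope.

Section Ultra.
Context {d : Order.disp_t} {X : orderType d}.

Definition pset := X -> Prop.
Definition ufam := pset -> Prop.

Definition is_ultrafilter (u : ufam) : Prop :=
  u (fun _ => True) /\
  ~ u (fun _ => False) /\
  (forall A B : pset, u A -> (forall x, A x -> B x) -> u B) /\
  (forall A B : pset, u A -> u B -> u (fun x => A x /\ B x)) /\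
  (forall A : pset, u A \/ u (fun x => ~ A x)).

Definition principal (x : X) : ufam := fun S => S x.

Definition nonprincipal (u : ufam) : Prop := ~ exists x, u = principal x.

Definition ext2 (F : X -> X -> X) (u v : ufam) : ufam :=
  fun S => u (fun x => v (fun y => S (F x y))).

Definition tmin (u v : ufam) : ufam := ext2 (fun x y => Order.min x y) u v.
Definition tmax (u v : ufam) : ufam := ext2 (fun x y => Order.max x y) u v.

Definition initial_seg (L : pset) : Prop := forall x y, L y -> x <= y -> L x.
Definition final_seg (J : pset) : Prop := forall x y, J x -> x <= y -> J y.

Definition I_u (u : ufam) : pset := fun x => forall L, initial_seg L -> u L -> L x.
Definition J_u (u : ufam) : pset := fun x => forall J, final_seg J -> u J -> J x.

(* supports: a point, a left half-cut (given by an initial segment),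
   or a right half-cut (given by a final segment) *)
Inductive support : Type :=
| SPoint of X
| SLeft of pset
| SRight of pset.

(* supp(~x) = {x}; for non-principal u, supp u = I_u (left) if I_u \in u,
   and J_u (right) otherwise (then J_u \in u). *)
Definition supp (u : ufam) : support :=
  match excluded_middle_informative (exists x, u = principal x) with
  | left H => SPoint (proj1_sig (constructive_indefinite_description _ H))
  | right _ =>
      if excluded_middle_informative (u (I_u u)) then SLeft (I_u u)
      else SRight (J_u u)
  end.

Definition supp_eq (s t : support) : Prop :=
  match s, t with
  | SPoint x, SPoint y => x = y
  | SLeft L, SLeft L' => forall z, L z <-> L' z
  | SRight J, SRight J' => forall z, J z <-> J' z
  | _, _ => False
  end.

Definition supp_lt (s t : support) : Prop :=
  match s, t with
  | SPoint x, SPoint y => x < y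
  | SPoint x, SLeft L => L x
  | SLeft L, SPoint x => ~ L x
  | SPoint x, SRight J => ~ J x
  | SRight J, SPoint x => J x
  | SLeft L, SLeft L' => (forall z, L z -> L' z) /\ exists z, L' z /\ ~ L z
  | SRight J, SRight J' => (forall z, J' z -> J z) /\ exists z, J z /\ ~ J' z
  | SLeft L, SRight J => forall z, ~ (L z /\ J z)
  | SRight J, SLeft L => exists z, L z /\ J z
  end.

(* "supp(u) = supp(v) = I_u = I_v" *)
Definition same_left_supp (u v : ufam) : Prop :=
  nonprincipal u /\ nonprincipal v /\ u (I_u u) /\ v (I_u v) /\
  (forall z, I_u u z <-> I_u v z).

(* "supp(u) = supp(v) = J_u = J_v" *)
Definition same_right_supp (u v : ufam) : Prop :=
  nonprincipal u /\ nonprincipal v /\ u (J_u u) /\ v (J_u v) /\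
  (forall z, J_u u z <-> J_u v z).

End Ultra.

(* Main.v *)
Require Import Defs.
From HB Require Import structures.
From mathcomp Require Import all_boot all_order.
From Stdlib Require Import Classical ClassicalEpsilon FunctionalExtensionality PropExtensionality.
Import Order.TTheory.
Local Open Scope order_scope.

Section L.
Context {d : Order.disp_t} {X : orderType d}.
Implicit Types (w u v : @ufam d X) (A B : @pset d X).

Lemma up {w} : is_ultrafilter w -> forall {A B : @pset d X}, w A -> (forall x, A x -> B x) -> w B.
Proof. intros (_&_&H&_); exact H. Qed.

Lemma uf_and {w} : is_ultrafilter w -> forall A B (C : @pset d X),
  w A -> w B -> (forall x, A x -> B x -> C x) -> w C.
Proof. intros hw A B C hA hB H. destruct hw as (_&_&Hu&Hi&_).
  apply (Hu _ _ (Hi _ _ hA hB)). intros x [? ?]; auto. Qed.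

Lemma nonempty {w} : is_ultrafilter w -> forall {A}, w A -> exists x, A x.
Proof. intros hw A hA. apply NNPP; intro N. destruct hw as (_&hF&Hu&_).
  apply hF. apply (Hu _ _ hA). intros x Ax; apply N; eauto. Qed.

Lemma compl {w} : is_ultrafilter w -> forall {A}, ~ w A -> w (fun x => ~ A x).
Proof. intros hw A nA. destruct hw as (_&_&_&_&H). destruct (H A); tauto. Qed.

Lemma notboth {w} : is_ultrafilter w -> forall {A}, w A -> w (fun x => ~ A x) -> False.
Proof. intros hw A h1 h2. destruct (nonempty hw (uf_and hw _ _ (fun x => A x /\ ~ A x) h1 h2 (fun x a b => conj a b))) as [x [? ?]]; auto. Qed.

Lemma const {w} : is_ultrafilter w -> forall {P : Prop}, w (fun _ => P) -> P.
Proof. intros hw P h. destruct (nonempty hw h); auto. Qed.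

Lemma I_char w z : is_ultrafilter w -> (I_u w z <-> w (fun y => z <= y)).
Proof. intros hw; split.
- intros H. apply NNPP; intro N. have := H _ _ (compl hw N). rewrite lexx. intro F; apply F; auto.
  intros a b nb ab za. apply nb. exact: le_trans za ab.
- intros Hw L HL HwL. destruct (nonempty hw (uf_and hw _ _ (fun y => z <= y /\ L y) Hw HwL (fun x a b => conj a b))) as [y [zy Ly]].
  exact: HL Ly zy.
Qed.

Lemma J_char w z : is_ultrafilter w -> (J_u w z <-> w (fun y => y <= z)).
Proof. intros hw; split.
- intros H. apply NNPP; intro N. have := H _ _ (compl hw N). rewrite lexx. intro F; apply F; auto.
  intros a b nb ab za. apply nb. exact: le_trans ab za.
- intros Hw L HL HwL. destruct (nonempty hw (uf_and hw _ _ (fun y => y <= z /\ L y) Hw HwL (fun x a b => conj a b))) as [y [zy Ly]].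
  exact: HL Ly zy.
Qed.

Lemma I_init w : initial_seg (I_u w).
Proof. intros x y Hy xy L HL HwL. exact: HL (Hy L HL HwL) xy. Qed.
Lemma J_final w : final_seg (J_u w).
Proof. intros x y Hy xy L HL HwL. exact: HL (Hy L HL HwL) xy. Qed.

Lemma sing {w} x : is_ultrafilter w -> w (fun y => y = x) -> w = principal x.
Proof. intros hw h. apply functional_extensionality; intro S; apply propositional_extensionality; split.
- intro hS. destruct (nonempty hw (uf_and hw _ _ (fun y => y = x /\ S y) h hS (fun x a b => conj a b))) as [y [-> ?]]; auto.
- intro Sx. unfold principal in Sx. apply (up hw h). intros y ->; auto.
Qed.

Lemma principal_uf x : is_ultrafilter (@principal d X x).
Proof. unfold principal; repeat split; auto. intros A; apply classic. Qed.

Lemma principal_inj x y : @principal d X x = principal y -> x = y.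
Proof. intro E. have := f_equal (fun f => f (fun t => t = y)) E. unfold principal; simpl.
  intro E'. rewrite E'; reflexivity. Qed.

Lemma IJ w z : is_ultrafilter w -> nonprincipal w -> (I_u w z <-> ~ J_u w z).
Proof. intros hw np. rewrite (I_char _ _ hw) (J_char _ _ hw). split.
- intros h1 h2. apply np; exists z. apply sing; auto.
  apply (uf_and hw _ _ _ h1 h2). intros y a b. apply/eqP. by rewrite eq_le a b.
- intro N. apply (up hw (compl hw N)). intros y ny. case/orP: (le_total y z) => h //; by rewrite h in ny.
Qed.

Lemma I_principal x z : I_u (@principal d X x) z <-> z <= x.
Proof. rewrite (I_char _ _ (principal_uf x)). reflexivity. Qed.

Lemma J_principal x z : J_u (@principal d X x) z <-> x <= z.
Proof. rewrite (J_char _ _ (principal_uf x)). reflexivity. Qed.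

Lemma supp_principal x : supp (@principal d X x) = SPoint x.
Proof. unfold supp. destruct (excluded_middle_informative _) as [H|H].
- destruct (constructive_indefinite_description _ H) as [y Hy]; simpl.
  by rewrite (principal_inj _ _ Hy).
- exfalso; apply H; eauto.
Qed.

Lemma supp_left w : nonprincipal w -> w (I_u w) -> supp w = SLeft (I_u w).
Proof. intros np h. unfold supp. destruct (excluded_middle_informative _) as [H|H]; [contradiction|].
  destruct (excluded_middle_informative _); [reflexivity|contradiction]. Qed.

Lemma supp_right w : nonprincipal w -> ~ w (I_u w) -> supp w = SRight (J_u w).
Proof. intros np h. unfold supp. destruct (excluded_middle_informative _) as [H|H]; [contradiction|].
  destruct (excluded_middle_informative _); [contradiction|reflexivity]. Qed.

Lemma right_J w : is_ultrafilter w -> nonprincipal w -> ~ w (I_u w) -> w (J_u w).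
Proof. intros hw np h. apply (up hw (compl hw h)). intros z nz. apply NNPP; intro N.
  apply nz; apply (IJ _ z hw np); auto. Qed.

Lemma kind w : (exists x, w = principal x) \/ (nonprincipal w /\ w (I_u w)) \/ (nonprincipal w /\ ~ w (I_u w)).
Proof. destruct (classic (exists x, w = principal x)) as [H|H]; [left; auto|right].
  destruct (classic (w (I_u w))); [left|right]; split; auto. Qed.


Lemma inner_min_I v x (S : @pset d X) : is_ultrafilter v -> I_u v x ->
  (v (fun y => S (Order.min x y)) <-> S x).
Proof. intros hv hx. rewrite (I_char _ _ hv) in hx. split.
- intro h. destruct (nonempty hv (uf_and hv _ _ (fun y => S (Order.min x y) /\ x <= y) h hx (fun _ a b => conj a b))) as [y [Sy xy]].
  by rewrite (min_l xy) in Sy.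
- intro Sx. apply (up hv hx). intros y xy. by rewrite (min_l xy).
Qed.

Lemma inner_min_nI v x (S : @pset d X) : is_ultrafilter v -> ~ I_u v x ->
  (v (fun y => S (Order.min x y)) <-> v S).
Proof. intros hv hx. rewrite (I_char _ _ hv) in hx. have hc := compl hv hx. split.
- intro h. apply (uf_and hv _ _ _ h hc). intros y a b. rewrite min_r in a => //.
  case/orP: (le_total x y) => h'; [by rewrite h' in b|done].
- intro h. apply (uf_and hv _ _ _ h hc). intros y a b. rewrite min_r => //.
  case/orP: (le_total x y) => h'; [by rewrite h' in b|done].
Qed.

Lemma inner_max_I v x (S : @pset d X) : is_ultrafilter v -> I_u v x ->
  (v (fun y => S (Order.max x y)) <-> v S).
Proof. intros hv hx. rewrite (I_char _ _ hv) in hx. split.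
- intro h. apply (uf_and hv _ _ _ h hx). intros y a b. by rewrite max_r in a.
- intro h. apply (uf_and hv _ _ _ h hx). intros y a b. by rewrite max_r.
Qed.

Lemma inner_max_nI v x (S : @pset d X) : is_ultrafilter v -> ~ I_u v x ->
  (v (fun y => S (Order.max x y)) <-> S x).
Proof. intros hv hx. rewrite (I_char _ _ hv) in hx. have hc := compl hv hx. split.
- intro h. destruct (nonempty hv (uf_and hv _ _ (fun y => S (Order.max x y) /\ ~ x <= y) h hc (fun _ a b => conj a b))) as [y [Sy xy]].
  rewrite max_l in Sy => //. case/orP: (le_total x y) => h'; [by rewrite h' in xy|done].
- intro Sx. apply (up hv hc). intros y xy. rewrite max_l => //.
  case/orP: (le_total x y) => h'; [by rewrite h' in xy|done].
Qed.

Lemma tmin_left u v : is_ultrafilter u -> is_ultrafilter v -> u (I_u v) -> tmin u v = u.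
Proof. intros hu hv hI. apply functional_extensionality; intro S; apply propositional_extensionality.
  unfold tmin, ext2. split.
- intro h. apply (uf_and hu _ _ _ h hI). intros x a b. by apply (inner_min_I _ _ S hv b).
- intro h. apply (uf_and hu _ _ _ h hI). intros x a b. by apply (inner_min_I _ _ S hv b).
Qed.

Lemma tmin_right u v : is_ultrafilter u -> is_ultrafilter v -> u (fun x => ~ I_u v x) -> tmin u v = v.
Proof. intros hu hv hI. apply functional_extensionality; intro S; apply propositional_extensionality.
  unfold tmin, ext2. split.
- intro h. apply (const hu). apply (uf_and hu _ _ _ h hI). intros x a b. by apply (inner_min_nI _ _ S hv b).
- intro h. apply (up hu hI). intros x b. by apply (inner_min_nI _ _ S hv b).
Qed.

Lemma tmax_left u v : is_ultrafilter u -> is_ultrafilter v -> u (I_u v) -> tmax u v = v.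
Proof. intros hu hv hI. apply functional_extensionality; intro S; apply propositional_extensionality.
  unfold tmax, ext2. split.
- intro h. apply (const hu). apply (uf_and hu _ _ _ h hI). intros x a b. by apply (inner_max_I _ _ S hv b).
- intro h. apply (up hu hI). intros x b. by apply (inner_max_I _ _ S hv b).
Qed.

Lemma tmax_right u v : is_ultrafilter u -> is_ultrafilter v -> u (fun x => ~ I_u v x) -> tmax u v = u.
Proof. intros hu hv hI. apply functional_extensionality; intro S; apply propositional_extensionality.
  unfold tmax, ext2. split.
- intro h. apply (uf_and hu _ _ _ h hI). intros x a b. by apply (inner_max_nI _ _ S hv b).
- intro h. apply (uf_and hu _ _ _ h hI). intros x a b. by apply (inner_max_nI _ _ S hv b).
Qed.

Lemma self_min v : is_ultrafilter v -> tmin v v = v.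
Proof. intro hv. destruct (classic (v (I_u v))) as [h|h].
  by apply tmin_left. by apply tmin_right; auto; apply compl. Qed.
Lemma self_max v : is_ultrafilter v -> tmax v v = v.
Proof. intro hv. destruct (classic (v (I_u v))) as [h|h].
  by apply tmax_left. by apply tmax_right; auto; apply compl. Qed.

Lemma eq1 u v : is_ultrafilter u -> is_ultrafilter v -> (tmin u v = u <-> u (I_u v) \/ u = v).
Proof. intros hu hv. split.
- intro E. destruct (classic (u (I_u v))) as [h|h]; [by left|right].
  by rewrite -E tmin_right //; apply compl.
- intros [h| ->]; [by apply tmin_left|by apply self_min].
Qed.
Lemma eq2 u v : is_ultrafilter u -> is_ultrafilter v -> (tmax u v = v <-> u (I_u v) \/ u = v).
Proof. intros hu hv. split.
- intro E. destruct (classic (u (I_u v))) as [h|h]; [by left|right].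
  by rewrite -E tmax_right //; apply compl.
- intros [h| ->]; [by apply tmax_left|by apply self_max].
Qed.
Lemma eq3 u v : is_ultrafilter u -> is_ultrafilter v -> (tmin u v = v <-> u (fun x => ~ I_u v x) \/ u = v).
Proof. intros hu hv. split.
- intro E. destruct (classic (u (I_u v))) as [h|h]; [right|by left; apply compl].
  by rewrite -E tmin_left.
- intros [h| ->]; [by apply tmin_right|by apply self_min].
Qed.
Lemma eq4 u v : is_ultrafilter u -> is_ultrafilter v -> (tmax u v = u <-> u (fun x => ~ I_u v x) \/ u = v).
Proof. intros hu hv. split.
- intro E. destruct (classic (u (I_u v))) as [h|h]; [right|by left; apply compl].
  by rewrite -E tmax_left.
- intros [h| ->]; [by apply tmax_right|by apply self_max].
Qed.


Lemma IJn w z : is_ultrafilter w -> nonprincipal w -> (~ I_u w z <-> J_u w z).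
Proof. intros hw np. rewrite (IJ _ z hw np). split; [apply NNPP| tauto]. Qed.

Lemma subI u v z : u (I_u v) -> I_u u z -> I_u v z.
Proof. intros h hz. exact (hz _ (I_init v) h). Qed.
Lemma subJ u v z : u (J_u v) -> J_u u z -> J_u v z.
Proof. intros h hz. exact (hz _ (J_final v) h). Qed.

Lemma np_principal x : ~ nonprincipal (@principal d X x).
Proof. intro h; apply h; eauto. Qed.

Lemma L1 u v : is_ultrafilter u -> is_ultrafilter v ->
  ((u (I_u v) \/ u = v) <-> supp_lt (supp u) (supp v) \/ same_left_supp u v \/ u = v).
Proof. intros hu hv.
destruct (kind u) as [[x ->]|[[npu hIu]|[npu hIu]]];
destruct (kind v) as [[y ->]|[[npv hIv]|[npv hIv]]].
- rewrite !supp_principal /=. split.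
  + intros [h|E]; [|by right; right]. have h' : x <= y by apply/I_principal; exact h.
    move: h'; rewrite le_eqVlt => /orP [/eqP ->|h'']; [by right; right|by left].
  + intros [h|[h2|E]]; [left; apply/I_principal; exact: ltW h| |by right].
    destruct h2 as [np _]; exfalso; exact: np_principal np.
- rewrite supp_principal (supp_left _ npv hIv) /=. split.
  + intros [h|E]; [by left|by right; right].
  + intros [h|[h2|E]]; [by left| |by right]. destruct h2 as [np _]; exfalso; exact: np_principal np.
- rewrite supp_principal (supp_right _ npv hIv) /=. split.
  + intros [h|E]; [left; by apply/(IJ _ x hv npv)|by right; right].
  + intros [h|[h2|E]]; [left; by apply/(IJ _ x hv npv)| |by right]. destruct h2 as [np _]; exfalso; exact: np_principal np.
- rewrite supp_principal (supp_left _ npu hIu) /=. split.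
  + intros [h|E]; [left|exfalso; apply npu; eauto].
    apply/(IJn _ y hu npu). apply (J_char _ y hu). apply (up hu h). intros z hz. by apply/I_principal.
  + intros [h|[h2|E]]; [left| |exfalso; apply npu; eauto].
    * have h' := proj1 (J_char _ _ hu) (proj1 (IJn _ y hu npu) h). apply (up hu h'). intros z hz. by apply/I_principal.
    * destruct h2 as (_&np&_); exfalso; exact: np_principal np.
- rewrite (supp_left _ npu hIu) (supp_left _ npv hIv) /=. split.
  + intros [h|E]; [|by right; right].
    destruct (classic (exists z, I_u v z /\ ~ I_u u z)) as [ex|nex].
    * left; split; [intros z; exact: subI h|exact ex].
    * right; left; repeat split; auto; [exact: subI h|].
      intro hz. apply NNPP; intro N. apply nex; eauto.
  + intros [[sub _]|[sl|E]]; [left; exact (up hu hIu sub)| |by right].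
    destruct sl as (_&_&_&_&heq). left. apply (up hu hIu). intros z hz; exact (proj1 (heq z) hz).
- rewrite (supp_left _ npu hIu) (supp_right _ npv hIv) /=. split.
  + intros [h|E]; [left|subst; contradiction].
    intros z [a b]. exact (proj1 (IJ _ z hv npv) (subI _ _ _ h a) b).
  + intros [h|[sl|E]]; [left| |by right].
    * apply (up hu hIu). intros z a. apply/(IJ _ z hv npv). intro b; exact (h z (conj a b)).
    * destruct sl as (_&_&_&c&_). contradiction.
- rewrite supp_principal (supp_right _ npu hIu) /=. split.
  + intros [h|E]; [left|exfalso; apply npu; eauto].
    apply (J_char _ y hu). apply (up hu h). intros z hz. by apply/I_principal.
  + intros [h|[h2|E]]; [left| |exfalso; apply npu; eauto].
    * have h' := proj1 (J_char _ _ hu) h. apply (up hu h'). intros z hz. by apply/I_principal.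
    * destruct h2 as (_&np&_); exfalso; exact: np_principal np.
- rewrite (supp_right _ npu hIu) (supp_left _ npv hIv) /=. split.
  + intros [h|E]; [left|subst; contradiction].
    destruct (nonempty hu (uf_and hu _ _ (fun z => I_u v z /\ ~ I_u u z) h (compl hu hIu) (fun _ a b => conj a b))) as [z [a b]].
    exists z; split; auto. by apply/(IJn _ z hu npu).
  + intros [[z [a b]]|[sl|E]]; [left| |by right].
    * have b' := proj1 (J_char _ _ hu) b. apply (up hu b'). intros y yz. exact: I_init a yz.
    * destruct sl as (_&_&c&_). contradiction.
- rewrite (supp_right _ npu hIu) (supp_right _ npv hIv) /=. split.
  + intros [h|E]; [left|by right; right]. split.
    * intros z hz. apply/(IJn _ z hu npu). intro c. exact (proj1 (IJ _ z hv npv) (subI _ _ _ h c) hz).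
    * apply NNPP; intro N. apply hIu. apply (up hu h). intros z a. apply NNPP; intro c.
      have c' := proj1 (IJn _ z hu npu) c. have a' := proj1 (IJ _ z hv npv) a. apply N; eauto.
  + intros [[sub [z [a b]]]|[sl|E]]; [left| |by right].
    * have a' := proj1 (J_char _ _ hu) a. apply (up hu a'). intros y yz. apply: I_init _ yz.
      by apply/(IJ _ z hv npv).
    * destruct sl as (_&_&c&_). contradiction.
Qed.


Lemma LJ_not_both u : is_ultrafilter u -> nonprincipal u -> u (I_u u) -> u (J_u u) -> False.
Proof. intros hu np h1 h2. apply (notboth hu h1). apply (up hu h2). intros z hz.
  exact (proj2 (IJn _ z hu np) hz). Qed.

Lemma L2 u v : is_ultrafilter u -> is_ultrafilter v ->
  ((u (fun x => ~ I_u v x) \/ u = v) <-> supp_lt (supp v) (supp u) \/ same_right_supp u v \/ u = v).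
Proof. intros hu hv.
destruct (kind u) as [[x ->]|[[npu hIu]|[npu hIu]]];
destruct (kind v) as [[y ->]|[[npv hIv]|[npv hIv]]].
- rewrite !supp_principal /=. split.
  + intros [h|E]; [left|by right; right].
    rewrite ltNge; apply/negP => c. apply h. by apply/I_principal.
  + intros [h|[h2|E]]; [left| |by right].
    * intro c. have c' : x <= y by apply/I_principal; exact c.
      by rewrite ltNge c' in h.
    * destruct h2 as [np _]; exfalso; exact: np_principal np.
- rewrite supp_principal (supp_left _ npv hIv) /=. split.
  + intros [h|E]; [by left|by right; right].
  + intros [h|[h2|E]]; [by left| |by right]. destruct h2 as [np _]; exfalso; exact: np_principal np.
- rewrite supp_principal (supp_right _ npv hIv) /=. split.
  + intros [h|E]; [left; exact (proj1 (IJn _ x hv npv) h)|by right; right].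
  + intros [h|[h2|E]]; [left; exact (proj2 (IJn _ x hv npv) h)| |by right].
    destruct h2 as [np _]; exfalso; exact: np_principal np.
- rewrite supp_principal (supp_left _ npu hIu) /=. split.
  + intros [h|E]; [left|exfalso; apply npu; eauto].
    apply/(IJ _ y hu npu). intro c. have c' := proj1 (J_char _ _ hu) c.
    apply (notboth hu c'). apply (up hu h). intros z nz zy. apply nz. by apply/I_principal.
  + intros [h|[h2|E]]; [left| |exfalso; apply npu; eauto].
    * have h' := proj1 (IJ _ y hu npu) h. 
      have h'' : u (fun z => ~ (z <= y)) by apply (compl hu); intro c; apply h'; apply (J_char _ _ hu); exact c.
      apply (up hu h''). intros z nz c. apply nz. by apply/I_principal.
    * destruct h2 as (_&np&_); exfalso; exact: np_principal np.
- rewrite (supp_left _ npu hIu) (supp_left _ npv hIv) /=. split.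
  + intros [h|E]; [left|by right; right].
    destruct (nonempty hu (uf_and hu _ _ (fun z => I_u u z /\ ~ I_u v z) hIu h (fun _ a b => conj a b))) as [z [a b]].
    split; [|exists z; split; auto].
    intros w hw. case/orP: (le_total z w) => zw.
    * exfalso; apply b. exact: I_init hw zw.
    * exact: I_init a zw.
  + intros [[sub [z [a b]]]|[sr|E]]; [left| |by right].
    * have a' := proj1 (I_char _ _ hu) a. apply (up hu a'). intros y zy c. apply b. exact: I_init c zy.
    * destruct sr as (_&_&c&_). exfalso; exact (LJ_not_both _ hu npu hIu c).
- rewrite (supp_left _ npu hIu) (supp_right _ npv hIv) /=. split.
  + intros [h|E]; [left|subst; contradiction].
    destruct (nonempty hu (uf_and hu _ _ (fun z => I_u u z /\ ~ I_u v z) hIu h (fun _ a b => conj a b))) as [z [a b]].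
    exists z; split; auto. exact (proj1 (IJn _ z hv npv) b).
  + intros [[z [a b]]|[sr|E]]; [left| |by right].
    * have a' := proj1 (I_char _ _ hu) a. apply (up hu a'). intros y zy c.
      exact (proj1 (IJ _ z hv npv) (I_init v _ _ c zy) b).
    * destruct sr as (_&_&c&_). exfalso; exact (LJ_not_both _ hu npu hIu c).
- rewrite supp_principal (supp_right _ npu hIu) /=. split.
  + intros [h|E]; [left|exfalso; apply npu; eauto].
    intro c. have c' := proj1 (J_char _ _ hu) c.
    apply (notboth hu c'). apply (up hu h). intros z nz zy. apply nz. by apply/I_principal.
  + intros [h|[h2|E]]; [left| |exfalso; apply npu; eauto].
    * have h'' : u (fun z => ~ (z <= y)) by apply (compl hu); intro c; apply h; apply (J_char _ _ hu); exact c.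
      apply (up hu h''). intros z nz c. apply nz. by apply/I_principal.
    * destruct h2 as (_&np&_); exfalso; exact: np_principal np.
- rewrite (supp_right _ npu hIu) (supp_left _ npv hIv) /=. split.
  + intros [h|E]; [left|subst; contradiction].
    intros z [a b]. have b' := proj1 (J_char _ _ hu) b.
    apply (notboth hu (A := I_u v)); auto. apply (up hu b'). intros y yz. exact: I_init a yz.
  + intros [h|[sr|E]]; [left| |by right].
    * apply (up hu (right_J _ hu npu hIu)). intros z a b. exact (h z (conj b a)).
    * destruct sr as (_&_&_&c&_). exfalso; exact (LJ_not_both _ hv npv hIv c).
- rewrite (supp_right _ npu hIu) (supp_right _ npv hIv) /=.
  have hJu := right_J _ hu npu hIu. have hJv := right_J _ hv npv hIv. split.
  + intros [h|E]; [|by right; right].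
    have h' : u (J_u v) by apply (up hu h); intros z hz; exact (proj1 (IJn _ z hv npv) hz).
    have sub : forall z, J_u u z -> J_u v z by intros z; exact: subJ h'.
    destruct (classic (exists z, J_u v z /\ ~ J_u u z)) as [ex|nex].
    * left; split; [exact sub|exact ex].
    * right; left. refine (conj npu (conj npv (conj hJu (conj hJv _)))). intro z; split; [exact: sub|].
      intro hz. apply NNPP; intro N. apply nex; eauto.
  + intros [[sub _]|[sr|E]]; [left| |by right].
    * apply (up hu hJu). intros z a. exact (proj2 (IJn _ z hv npv) (sub z a)).
    * destruct sr as (_&_&_&_&heq). left. apply (up hu hJu). intros z a.
      exact (proj2 (IJn _ z hv npv) (proj1 (heq z) a)).
Qed.

End L.

Theorem corollary4 (d : Order.disp_t) (X : orderType d) (u v : @ufam d X)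
  (hu : is_ultrafilter u) (hv : is_ultrafilter v) :
  ((tmin u v = u <-> tmax u v = v) /\
   (tmax u v = v <->
      supp_lt (supp u) (supp v) \/ same_left_supp u v \/ u = v)) /\
  ((tmin u v = v <-> tmax u v = u) /\
   (tmax u v = u <->
      supp_lt (supp v) (supp u) \/ same_right_supp u v \/ u = v)).
Proof.
  rewrite (eq1 _ _ hu hv) (eq2 _ _ hu hv) (eq3 _ _ hu hv) (eq4 _ _ hu hv).
  split; split; try reflexivity; [exact (L1 _ _ hu hv)|exact (L2 _ _ hu hv)].
Qed.
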